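(* Let $\mathbb G=V_1\times V_2$ be a step-two Carnot group and let $f\in\mathcal A_h(\mathbb G)$. Assume in addition that $f$ is $V_2$-affine, i.e. for every $(x,z)\in\mathbb G$ and $z'\in V_2$ the map $t\in\mathbb R\mapsto f(x,z+tz')$ is affine. Then there are an affine map $a\in\mathcal A(V_1\times V_2)$ and a bilinear map $b:V_1\times V_2\to\mathbb R$ such that $b(x,[x,x'])=0$ for all $x,x'\in V_1$ and $f(x,z)=a(x,z)+b(x,z)$ for all $(x,z)\in\mathbb G$.
   Context: A step-two Carnot group is $\mathbb G=V_1\times V_2$, where $V_1,V_2$ are finite-dimensional real vector spaces with $V_2\neq\{0\}$, equipped with a bilinear skew-symmetric map $[\cdot,\cdot]:V_1\times V_1\to V_2$ with $\operatorname{span}\{[x,x']:x,x'\in V_1\}=V_2$, and group law $(x,z)\cdot(x',z')=(x+x',z+z'+[x,x'])$. $\mathcal A_h(\mathbb G)$ is the space of $h$-affine maps $f:\mathbb G\to\mathbb R$, i.e. such that for all $(x,z)\in\mathbb G$, $y\in V_1$, $t\mapsto f((x,z)\cdot(ty,0))$ is affine. $\mathcal A(V_1\times V_2)$ denotes the maps affine in the usual sense on the vector space $V_1\times V_2$. *)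

(* Defs.v *)
From HB Require Import structures.
From mathcomp Require Import all_boot all_order all_algebra.
From mathcomp Require Import reals.
Set Implicit Arguments. Unset Strict Implicit. Unset Printing Implicit Defensive.
Import Order.TTheory GRing.Theory Num.Theory.
Local Open Scope ring_scope.

Section Defs.
Variable R : realType.

Definition lin_map (U W : lmodType R) (g : U -> W) :=
  forall (c : R) (u v : U), g (c *: u + v) = c *: g u + g v.

Definition lin_form (U : lmodType R) (g : U -> R) :=
  forall (c : R) (u v : U), g (c *: u + v) = c * g u + g v.

Definition affine_fun (g : R -> R) := exists a b : R, forall t, g t = a + b * t.

Variables V1 V2 : vectType R.

(* step-two Carnot group data: bilinear skew-symmetric bracket spanning V2, V2 <> 0 *)
Definition carnot_bracket (br : V1 -> V1 -> V2) :=
  [/\ (forall x, lin_map (br x)), (forall x', lin_map (fun x => br x x')),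
      (forall x x', br x x' = - br x' x),
      (forall z : V2, exists (n : nat) (c : 'I_n -> R) (x x' : 'I_n -> V1),
          z = \sum_(i < n) c i *: br (x i) (x' i))
    & exists z : V2, z != 0].

Definition cmul (br : V1 -> V1 -> V2) (p q : V1 * V2) : V1 * V2 :=
  (p.1 + q.1, p.2 + q.2 + br p.1 q.1).

Definition h_affine (br : V1 -> V1 -> V2) (f : V1 * V2 -> R) :=
  forall (p : V1 * V2) (y : V1), affine_fun (fun t => f (cmul br p (t *: y, 0))).

Definition V2_affine (f : V1 * V2 -> R) :=
  forall (x : V1) (z z' : V2), affine_fun (fun t => f (x, z + t *: z')).

Definition affine_map (a : V1 * V2 -> R) :=
  exists (c : R) (l : V1 * V2 -> R), lin_form l /\ forall p, a p = c + l p.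

Definition bilin_form (b : V1 -> V2 -> R) :=
  (forall x, lin_form (b x)) /\ (forall z, lin_form (fun x => b x z)).

End Defs.

(* Main.v *)
Require Import Defs.
From HB Require Import structures.
From mathcomp Require Import all_boot all_order all_algebra.
From mathcomp Require Import reals.
From mathcomp Require Import ring lra.
Import GRing.Theory Num.Theory.
Local Open Scope ring_scope.

Section Aux.
Variable R : realType.

Lemma aff01 {phi : R -> R} : affine_fun phi -> forall t, phi t = phi 0 + t * (phi 1 - phi 0).
Proof. by move=> [a [b H]] t; rewrite !H; ring. Qed.

Lemma aff_shift {phi psi : R -> R} {k} : affine_fun phi ->
  (forall t, psi t = phi t - t * k) -> affine_fun psi.
Proof. by move=> [a [b H]] E; exists a, (b - k) => t; rewrite E H; ring. Qed.

Lemma aff_sub {phi psi chi : R -> R} : affine_fun phi -> affine_fun psi ->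
  (forall t, chi t = phi t - psi t) -> affine_fun chi.
Proof.
by move=> [a [b H]] [a' [b' H']] E; exists (a - a'), (b - b') => t; rewrite E H H'; ring.
Qed.

Variable U : lmodType R.

Lemma lf0 {g : U -> R} : lin_form g -> g 0 = 0.
Proof. move=> H; have := H 1 0 0; rewrite scaler0 addr0 mul1r => e; lra. Qed.

Lemma lfZ {g : U -> R} : lin_form g -> forall c u, g (c *: u) = c * g u.
Proof. by move=> H c u; have := H c u 0; rewrite !addr0 (lf0 H) addr0. Qed.

Lemma lfD {g : U -> R} : lin_form g -> forall u v, g (u + v) = g u + g v.
Proof. by move=> H u v; have := H 1 u v; rewrite scale1r mul1r. Qed.

Lemma lfN {g : U -> R} : lin_form g -> forall u, g (- u) = - g u.
Proof. by move=> H u; rewrite -scaleN1r (lfZ H) mulN1r. Qed.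

Lemma lfB {p q : U -> R} : lin_form p -> lin_form q -> lin_form (fun u => p u - q u).
Proof. by move=> Hp Hq c u v; rewrite Hp Hq; ring. Qed.

Lemma aff_lin {h : U -> R} : (forall u v, affine_fun (fun t => h (u + t *: v))) ->
  lin_form (fun u => h u - h 0).
Proof.
move=> H.
have E u v t : h (u + t *: v) = h u + t * (h (u + v) - h u).
  by have := aff01 (H u v) t => /= ->; rewrite scale0r addr0 scale1r.
have Hom v t : h (t *: v) = h 0 + t * (h v - h 0) by have := E 0 v t; rewrite !add0r.
have Add u v : h (u + v) = h u + h v - h 0.
  have e1 := E u (v - u) (2^-1).
  have e2 := Hom (u + v) (2^-1).
  have eq1 : u + 2^-1 *: (v - u) = 2^-1 *: (u + v).
    have h2 : (2 : R) != 0 by rewrite pnatr_eq0.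
    apply: (scalerI h2); rewrite scalerDr !scalerA mulfV // !scale1r scalerDl scale1r.
    by rewrite -addrA [u + (v - u)]addrC subrK.
  have eq2 : u + (v - u) = v by rewrite addrC subrK.
  rewrite eq1 eq2 e2 in e1; lra.
move=> c u v /=; rewrite Add Hom; ring.
Qed.

End Aux.
Arguments aff01 {R phi}. Arguments aff_shift {R phi psi k}. Arguments aff_sub {R phi psi chi}.
Arguments lf0 {R U g}. Arguments lfZ {R U g}. Arguments lfD {R U g}. Arguments lfN {R U g}.
Arguments lfB {R U p q}. Arguments aff_lin {R U h}.

Section Aux2.
Variable R : realType.
Variables U W : lmodType R.

Lemma lm0 {g : U -> W} : lin_map g -> g 0 = 0.
Proof.
move=> H; have := H 1 0 0; rewrite scaler0 addr0 scale1r.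
by move/(congr1 (fun w => w - g 0)); rewrite subrr addrK.
Qed.

Lemma lmZ {g : U -> W} : lin_map g -> forall c u, g (c *: u) = c *: g u.
Proof. by move=> H c u; have := H c u 0; rewrite !addr0 (lm0 H) addr0. Qed.
End Aux2.
Arguments lm0 {R U W g}. Arguments lmZ {R U W g}.

Theorem proposition3p4 (R : realType) (V1 V2 : vectType R)
  (br : V1 -> V1 -> V2) (Hbr : carnot_bracket br)
  (f : V1 * V2 -> R) (Hf : h_affine br f) (HfV2 : V2_affine f) :
  exists (a : V1 * V2 -> R) (b : V1 -> V2 -> R),
    [/\ affine_map a, bilin_form b,
        (forall x x' : V1, b x (br x x') = 0)
      & forall (x : V1) (z : V2), f (x, z) = a (x, z) + b x z].
Proof.
move: Hbr => [Hl Hr Hsk _ _].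
pose g := fun x => f (x, 0).
pose L := fun x z => f (x, z) - f (x, 0).
have HL x : lin_form (L x).
  exact: (@aff_lin R V2 (fun z => f (x, z)) (fun u v => HfV2 x u v)).
have cmulE x z y t : cmul br (x, z) (t *: y, 0) = (x + t *: y, z + t *: br x y).
  by rewrite /cmul /= addr0 (lmZ (Hl x)).
have HLx z : lin_form (fun x => L x z - L 0 z).
  apply: (@aff_lin R V1 (fun x => L x z)) => x y.
  apply: (aff_sub (Hf (x, z) y) (Hf (x, 0) y)) => t /=.
  rewrite !cmulE add0r; have := lfD (HL (x + t *: y)) z (t *: br x y); rewrite /L => e; lra.
pose c := fun z => L 0 z.
pose B := fun x z => L x z - L 0 z.
have Hc : lin_form c by exact: HL.
have Bl : bilin_form B.
  split; last exact: HLx.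
  by move=> x; apply: lfB; [exact: HL | exact: HL].
have fE x z : f (x, z) = g x + c z + B x z by rewrite /g /c /B /L; ring.
have phiE x y t : f (cmul br (x, 0) (t *: y, 0)) =
   g (x + t *: y) + t * c (br x y) + t * B x (br x y) + t ^+ 2 * B y (br x y).
  rewrite cmulE add0r fE (lfZ Hc) (lfZ (Bl.1 _)) (lfD (Bl.2 _)) (lfZ (Bl.2 _)); ring.
have E x y : g x - 2 * g (x + y) + g (x + 2 *: y) + 2 * B y (br x y) = 0.
  have := aff01 (Hf (x, 0) y) 2; rewrite /= !phiE scale0r addr0 scale1r.
  rewrite !expr2 !mul0r !mul1r !addr0 => e.
  lra.
have Hg y t : g (t *: y) = g 0 + t * (g y - g 0).
  have := aff01 (Hf (0, 0) y) t; rewrite /= !cmulE !add0r scale0r scale1r.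
  rewrite (lm0 (Hr y)) !scaler0 ?addr0 ?add0r. by [].
have Q0 x y : B y (br x y) = 0.
  have e1 := E (2 *: x) y.
  have e2 := E x (2^-1 *: y).
  have h2 : (2 : R) != 0 by rewrite pnatr_eq0.
  have v1 : x = 2^-1 *: (2 *: x) by rewrite scalerA mulVf // scale1r.
  have v2 : x + 2^-1 *: y = 2^-1 *: (2 *: x + y)
    by rewrite scalerDr scalerA mulVf // scale1r.
  have v3 : x + 2 *: (2^-1 *: y) = 2^-1 *: (2 *: x + 2 *: y)
    by rewrite scalerDr !scalerA mulVf // mulfV // !scale1r.
  rewrite v2 v3 {1}v1 !Hg in e2.
  rewrite (lmZ (Hl x)) (lfZ (Bl.1 _)) (lfZ (Bl.2 _)) in e2.
  rewrite (lmZ (Hr y)) (lfZ (Bl.1 _)) in e1.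
  move: e1 e2; set q := B y (br x y) => e1 e2.
  rewrite (Hg x 2) in e1. lra.
have Bz x y : B x (br x y) = 0.
  by have := Q0 y x; rewrite Hsk (lfN (Bl.1 _)) => /eqP; rewrite oppr_eq0 => /eqP.
have Ga : lin_form (fun x => g x - g 0).
  apply: aff_lin => x y.
  apply: (aff_shift (k := c (br x y)) (Hf (x, 0) y)) => t /=.
  rewrite phiE Bz Q0; ring.
exists (fun p => g 0 + ((g p.1 - g 0) + c p.2)), B; split.
- exists (g 0), (fun p => (g p.1 - g 0) + c p.2); split => //.
  move=> k [p1 p2] [q1 q2] /=.
  rewrite (Ga k p1 q1) (Hc k p2 q2); ring.
- exact: Bl.
- exact: Bz.
- by move=> x z; rewrite fE /=; ring.
Qed.
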